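(* Let $\Omega$ be a finite set and let $p,q$ be probability distributions on $\Omega$. Let $X_1,X_2$ be drawn i.i.d. from $p$ and $\mathcal{S}=\{X_1,X_2\}$, and let $P^\star(\mathrm{acc})$ be the supremum of $\Pr(Z\in\mathcal{S})$ over all valid token-level selection rules with output $Z$. Then $$P^\star(\mathrm{acc})=\min_{\mathcal{A}\subseteq\Omega}\Big\{\sum_{s\in\mathcal{A}}q(s)+\Big(\sum_{s\in\mathcal{A}^c}p(s)\Big)^2+2\Big(\sum_{s\in\mathcal{A}}p(s)\Big)\Big(\sum_{s\in\mathcal{A}^c}p(s)\Big)\Big\},$$ where $\mathcal{A}^c=\Omega\setminus\mathcal{A}$.
   Context: A token-level selection rule is a conditional distribution $\mathcal{P}(\cdot\mid X_1,X_2)$ on $\Omega$; it is valid if its output $Z$ satisfies $\Pr(Z=z)=q(z)$ for all $z\in\Omega$, where $X_1,X_2$ are i.i.d. with law $p$. *)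

(* Defs.v *)
From HB Require Import structures.
From mathcomp Require Import all_boot all_order all_algebra.
From mathcomp Require Import all_classical all_reals.
Set Implicit Arguments. Unset Strict Implicit. Unset Printing Implicit Defensive.
Import Order.TTheory GRing.Theory Num.Theory.
Local Open Scope ring_scope.
Local Open Scope classical_set_scope.

Section Defs.
Variables (R : realType) (Omega : finType).

Definition is_distr (p : Omega -> R) : Prop :=
  (forall x, 0 <= p x) /\ \sum_(x : Omega) p x = 1.

(* a token-level selection rule: a conditional distribution P(z | x1, x2) *)
Definition is_selection_rule (K : Omega -> Omega -> Omega -> R) : Prop :=
  forall x1 x2, is_distr (K x1 x2).

Definition output_law (p : Omega -> R) (K : Omega -> Omega -> Omega -> R) (z : Omega) : R :=
  \sum_(x1 : Omega) \sum_(x2 : Omega) p x1 * p x2 * K x1 x2 z.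

Definition valid_rule (p q : Omega -> R) (K : Omega -> Omega -> Omega -> R) : Prop :=
  is_selection_rule K /\ forall z, output_law p K z = q z.

Definition acc_prob (p : Omega -> R) (K : Omega -> Omega -> Omega -> R) : R :=
  \sum_(x1 : Omega) \sum_(x2 : Omega) \sum_(z : Omega)
     (if (z == x1) || (z == x2) then p x1 * p x2 * K x1 x2 z else 0).

Definition opt_acc (p q : Omega -> R) : R :=
  sup [set acc_prob p K | K in [set K | valid_rule p q K]].

Definition objective (p q : Omega -> R) (A : {set Omega}) : R :=
  \sum_(s in A) q s + (\sum_(s in ~: A) p s) ^+ 2
  + 2 * (\sum_(s in A) p s) * (\sum_(s in ~: A) p s).

End Defs.

(* Main.v *)
Require Import Defs.
From HB Require Import structures.
From mathcomp Require Import all_boot all_order all_algebra.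
From mathcomp Require Import all_classical all_reals.
From mathcomp Require Import ring lra zify.
Import Order.TTheory GRing.Theory Num.Theory.
Local Open Scope ring_scope.

Set Implicit Arguments. Unset Strict Implicit. Unset Printing Implicit Defensive.

Section Gale.
Variables (R : realType) (S T : finType).

Definition flow_ok (N : S -> {set T}) (w : S -> R) (q : T -> R) (F : S -> T -> R) : Prop :=
  [/\ forall s t, 0 <= F s t, forall s t, t \notin N s -> F s t = 0,
      forall s, \sum_t F s t <= w s & forall t, \sum_s F s t <= q t].
Definition fval (F : S -> T -> R) := \sum_s \sum_t F s t.
Definition phi (N : S -> {set T}) (w : S -> R) (q : T -> R) (A : {set T}) :=
  \sum_t (if t \in A then q t else 0) + \sum_s (if N s \subset A then 0 else w s).
Definition wf (D : {set T}) (N : S -> {set T}) (w : S -> R) (q : T -> R) :=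
  [/\ forall s, 0 <= w s, forall t, 0 <= q t & forall s, N s \subset D].
Definition concl (N : S -> {set T}) (w : S -> R) (q : T -> R) := exists F, flow_ok N w q F /\ exists A, phi N w q A <= fval F.
Definition meas (w : S -> R) (q : T -> R) := (#|[set s | (0 < w s)%R]| + #|[set t | (0 < q t)%R]|)%N.

Lemma exists_min (f : {set T} -> R) (P : pred {set T}) B0 :
  P B0 -> exists B, P B /\ forall B', P B' -> f B <= f B'.
Proof.
move=> PB0; case: (arg_minP f PB0) => B PB Hmin.
by exists B; split.
Qed.

Lemma phi_capD D N w q B : wf D N w q -> phi N w q (B :&: D) <= phi N w q B.
Proof.
case=> _ q0 ND; rewrite /phi lerD //.
  apply: ler_sum => t _; rewrite inE.
  by case: (t \in B) => //=; case: (t \in D).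
rewrite le_eqVlt; apply/orP; left; apply/eqP/eq_bigr => s _.
by rewrite finset.subsetI (ND s) andbT.
Qed.

Lemma trivial_case D N w q : wf D N w q ->
  ~ (exists s t, [/\ t \in N s, 0 < w s & 0 < q t]) -> concl N w q.
Proof.
case=> w0 q0 ND Hno.
exists (fun _ _ => 0); split.
  split => //.
  - by move=> s; rewrite big1.
  - by move=> t; rewrite big1.
exists [set t | q t == 0].
rewrite /phi /fval !big1 ?addr0 //.
- move=> s _; case: ifP => // /negbT/subsetPn [t tN].
  rewrite inE => qt; apply/eqP; rewrite eq_le w0 andbT leNgt; apply/negP => ws.
  apply: Hno; exists s, t; split => //.
  by rewrite lt_def qt q0.
- by move=> t _; case: ifP => //; rewrite inE => /eqP.
Qed.

Lemma sum_le0_eq0 (F : T -> R) : (forall t, 0 <= F t) -> \sum_t F t <= 0 -> \sum_t F t = 0.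
Proof. by move=> F0 H; apply/le_anti; rewrite H sumr_ge0. Qed.

Lemma split_case n
  (IH : forall (D : {set T}) N w q, (#|D| <= n)%N -> wf D N w q -> concl N w q)
  (D : {set T}) (N : S -> {set T}) (w : S -> R) (q : T -> R) (A : {set T}) : (#|D| <= n.+1)%N -> wf D N w q -> A \subset D -> A != finset.set0 -> A != D ->
  (forall B, phi N w q A <= phi N w q B) -> concl N w q.
Proof.
move=> cD wfD AD A0 AnD Amin.
have [w0 q0 ND] := wfD.
set U := D :\: A.
pose N1 s := N s :&: A.
pose w1 s := if N s \subset A then w s else 0.
pose N2 s := N s :\: A.
pose w2 s := if N s \subset A then 0 else w s.
have cA : (#|A| <= n)%N.
  have : A \proper D by rewrite finset.properEneq AnD AD.
  by move/proper_card => H; rewrite -ltnS (leq_trans H cD).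
have cU : (#|U| <= n)%N.
  have : U \proper D.
    apply/properP; split; first exact: subsetDl.
    case/set0Pn: A0 => a aA; exists a; first exact: (fintype.subsetP AD).
    by rewrite inE aA.
  by move/proper_card => H; rewrite -ltnS (leq_trans H cD).
have wf1 : wf A N1 w1 q.
  split => //; first by move=> s; rewrite /w1; case: ifP.
  by move=> s; exact: finset.subsetIr.
have wf2 : wf U N2 w2 q.
  split => //; first by move=> s; rewrite /w2; case: ifP.
  by move=> s; rewrite /N2 /U; apply: finset.setSD; exact: ND.
have [F1 [[F10 F1N F1w F1q] [B1 hB1]]] := IH A N1 w1 q cA wf1.
have [F2 [[F20 F2N F2w F2q] [B2 hB2]]] := IH U N2 w2 q cU wf2.
pose qA := \sum_t (if t \in A then q t else 0).
pose X := \sum_s (if N s \subset A then 0 else w s).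
have E1 : forall C : {set T}, C \subset A -> phi N w q C = phi N1 w1 q C + X.
  move=> C CA; rewrite /phi -addrA; congr (_ + _).
  rewrite /X -big_split; apply: eq_bigr => s _ /=.
  rewrite /N1 /w1; case: (boolP (N s \subset A)) => NA.
    by rewrite (finset.setIidPl NA) addr0.
  have -> : (N s \subset C) = false.
    by apply/negP => NC; move/negP: NA; apply; exact: fintype.subset_trans NC CA.
  by case: ifP; rewrite add0r.
have phi1A : phi N1 w1 q A = qA.
  by rewrite /phi [Y in _ + Y]big1 ?addr0 // => s _; rewrite /N1 finset.subsetIr.
have k1 : qA <= fval F1.
  apply: (le_trans _ hB1); apply: (le_trans _ (@phi_capD _ _ _ _ B1 wf1)).
  rewrite -(lerD2r X) -E1 ?finset.subsetIr // -phi1A -E1 //.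
have E2 : forall C : {set T}, C \subset U -> phi N w q (A :|: C) = qA + phi N2 w2 q C.
  move=> C CU; rewrite /phi addrA; congr (_ + _).
    rewrite /qA -big_split; apply: eq_bigr => t _ /=.
    rewrite finset.in_setU; case: (boolP (t \in A)) => tA /=.
      case: (boolP (t \in C)) => tC; last by rewrite addr0.
      by move: (fintype.subsetP CU t tC); rewrite inE tA.
    by rewrite add0r.
  apply: eq_bigr => s _; rewrite /N2 /w2 subDset.
  case: (boolP (N s \subset A)) => NA.
    by rewrite (fintype.subset_trans NA (finset.subsetUl _ _)).
  by [].
have k2 : X <= fval F2.
  apply: (le_trans _ hB2); apply: (le_trans _ (@phi_capD _ _ _ _ B2 wf2)).
  rewrite -(lerD2l qA) -E2 ?finset.subsetIr //.
pose F s t := if N s \subset A then F1 s t else F2 s t.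
exists F; split.
  split.
  - by move=> s t; rewrite /F; case: ifP.
  - move=> s t tN; rewrite /F; case: ifP => _.
      by apply: F1N; rewrite inE (negbTE tN).
    by apply: F2N; rewrite inE (negbTE tN) andbF.
  - move=> s; rewrite /F; case: (boolP (N s \subset A)) => NA /=.
      by have := F1w s; rewrite /w1 NA.
    by have := F2w s; rewrite /w2 (negbTE NA).
  - move=> t; case: (boolP (t \in A)) => tA.
      apply: le_trans (F1q t); apply: ler_sum => s _; rewrite /F; case: ifP => // _.
      by rewrite F2N // inE tA.
    apply: le_trans (F2q t); apply: ler_sum => s _; rewrite /F; case: ifP => // _.
    by rewrite F1N // inE (negbTE tA) andbF.
exists A.
have -> : fval F = fval F1 + fval F2.
  rewrite /fval -big_split; apply: eq_bigr => s _ /=; rewrite /F.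
  case: (boolP (N s \subset A)) => NA /=.
    rewrite [Y in _ = _ + Y]sum_le0_eq0 ?addr0 //.
    by have := F2w s; rewrite /w2 NA.
  rewrite /= [Y in _ = Y + _]sum_le0_eq0 ?add0r //.
  by have := F1w s; rewrite /w1 (negbTE NA).
by rewrite /phi lerD.
Qed.

Definition red_w (w : S -> R) s0 eps s := if s == s0 then w s - eps else w s.
Definition red_q (q : T -> R) t0 eps t := if t == t0 then q t - eps else q t.

Lemma sum_deltaT (c : R) t0 : \sum_(t : T) (if t == t0 then c else 0) = c.
Proof.
by rewrite (bigD1 t0) //= eqxx big1 ?addr0 // => t /negbTE ->.
Qed.

Lemma sum_deltaS (c : R) s0 : \sum_(s : S) (if s == s0 then c else 0) = c.
Proof.
by rewrite (bigD1 s0) //= eqxx big1 ?addr0 // => t /negbTE ->.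
Qed.

Lemma phi_red N w q s0 t0 eps B :
  phi N (red_w w s0 eps) (red_q q t0 eps) B =
  phi N w q B - (if t0 \in B then eps else 0) - (if N s0 \subset B then 0 else eps).
Proof.
rewrite /phi.
have -> : \sum_t (if t \in B then red_q q t0 eps t else 0) =
          \sum_t (if t \in B then q t else 0) - \sum_t (if t == t0 then (if t0 \in B then eps else 0) else 0).
  rewrite -sumrB; apply: eq_bigr => t _; rewrite /red_q.
  by case: (eqVneq t t0) => [->|_]; case: ifP; rewrite ?subr0 ?subrr.
have -> : \sum_s (if N s \subset B then 0 else red_w w s0 eps s) =
          \sum_s (if N s \subset B then 0 else w s) - \sum_s (if s == s0 then (if N s0 \subset B then 0 else eps) else 0).
  rewrite -sumrB; apply: eq_bigr => s _; rewrite /red_w.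
  by case: (eqVneq s s0) => [->|_]; case: ifP; rewrite ?subr0 ?subrr.
rewrite sum_deltaT sum_deltaS.
by ring.
Qed.

Lemma lift_red D N w q s0 t0 eps phistar : wf D N w q -> t0 \in N s0 ->
  0 <= eps -> eps <= w s0 -> eps <= q t0 ->
  (exists A, phi N w q A = phistar) ->
  (forall B, phistar - eps <= phi N (red_w w s0 eps) (red_q q t0 eps) B) ->
  concl N (red_w w s0 eps) (red_q q t0 eps) -> concl N w q.
Proof.
move=> [w0 q0 ND] tN e0 ew eq [A hA] hmin [F' [[F0 FN Fw Fq] [A' hA']]].
pose F s t := F' s t + (if (s == s0) && (t == t0) then eps else 0).
have rowF : forall s, \sum_t F s t = \sum_t F' s t + (if s == s0 then eps else 0).
  move=> s; rewrite big_split /=; congr (_ + _).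
  case: (eqVneq s s0) => _ /=; first by rewrite sum_deltaT.
  by rewrite big1.
have colF : forall t, \sum_s F s t = \sum_s F' s t + (if t == t0 then eps else 0).
  move=> t; rewrite big_split /=; congr (_ + _).
  case: (eqVneq t t0) => _ /=; last by rewrite big1 // => s _; rewrite andbF.
  by under eq_bigr do rewrite andbT; rewrite sum_deltaS.
exists F; split.
  split.
  - by move=> s t; rewrite /F addr_ge0 //; case: ifP.
  - move=> s t tNs; rewrite /F FN // add0r.
    case: (eqVneq s s0) => [es|] //=; case: (eqVneq t t0) => [et|] //=.
    by move: tNs; rewrite es et tN.
  - move=> s; rewrite rowF; have := Fw s; rewrite /red_w.
    by case: (eqVneq s s0) => [->|_]; rewrite ?addr0 // lerBrDr.
  - move=> t; rewrite colF; have := Fq t; rewrite /red_q.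
    by case: (eqVneq t t0) => [->|_]; rewrite ?addr0 // lerBrDr.
exists A; rewrite hA.
have -> : fval F = fval F' + eps.
  rewrite /fval (eq_bigr _ (fun s _ => rowF s)) big_split /=.
  by rewrite sum_deltaS.
by rewrite -lerBlDr; apply: le_trans hA'.
Qed.

Lemma key_ineq N w q s0 t0 eps phistar : 0 <= eps ->
  (forall B, phistar <= phi N w q B) ->
  (forall B : {set T}, (t0 \in B) && ~~ (N s0 \subset B) -> eps <= phi N w q B - phistar) ->
  forall B, phistar - eps <= phi N (red_w w s0 eps) (red_q q t0 eps) B.
Proof.
move=> e0 hmin hbad B; rewrite phi_red.
have := hmin B; have := hbad B.
case: (t0 \in B); case: (N s0 \subset B) => /= H1 H2; first lra.
- have := H1 erefl; lra.
- lra.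
- lra.
Qed.

Lemma step n m
  (IHn : forall m' (D : {set T}) N w q, (#|D| <= n)%N -> (meas w q <= m')%N -> wf D N w q -> concl N w q)
  (IHm : forall (D : {set T}) N w q, (#|D| <= n.+1)%N -> (meas w q <= m)%N -> wf D N w q -> concl N w q)
  (D : {set T}) N w q : (#|D| <= n.+1)%N -> (meas w q <= m.+1)%N -> wf D N w q -> concl N w q.
Proof.
move=> cD cm wfD.
have IH' : forall (D : {set T}) N w q, (#|D| <= n)%N -> wf D N w q -> concl N w q.
  by move=> D' N' w' q' c' wf'; exact: (IHn _ D' N' w' q' c' (leqnn _) wf').
have [w0 q0 ND] := wfD.
have [Astar [_ Amin]] := @exists_min (phi N w q) predT finset.set0 isT.
set phistar := phi N w q Astar.
have Amin' : forall B, phistar <= phi N w q B by move=> B; exact: Amin.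
case: (pselect (exists s t, [/\ t \in N s, 0 < w s & 0 < q t])); last first.
  by move=> H; exact: trivial_case wfD H.
case=> s0 [t0 [tN ws qt]].
have t0D : t0 \in D by exact: (fintype.subsetP (ND s0)).
pose Cbad (B : {set T}) := (t0 \in B) && ~~ (N s0 \subset B).
pose eps0 := Num.min (w s0) (q t0).
have e0w : eps0 <= w s0 by rewrite /eps0 ge_min lexx.
have e0q : eps0 <= q t0 by rewrite /eps0 ge_min lexx orbT.
case: (pselect (exists B, Cbad B && (phi N w q B - phistar <= eps0))).
  case=> B /andP [BC Bs].
  have [Bm [BmC Bmmin]] := @exists_min (phi N w q) Cbad B BC.
  pose eps := phi N w q Bm - phistar.
  have e0 : 0 <= eps by rewrite subr_ge0.
  have eB : eps <= eps0.
    by apply: (le_trans _ Bs); rewrite lerD2r; exact: Bmmin.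
  have hbad : forall B', Cbad B' -> eps <= phi N w q B' - phistar.
    by move=> B' HB'; rewrite lerD2r; exact: Bmmin.
  have hk := @key_ineq N w q s0 t0 eps phistar e0 Amin' hbad.
  apply: (@lift_red D N w q s0 t0 eps phistar) => //.
  - exact: (le_trans eB e0w).
  - exact: (le_trans eB e0q).
  - by exists Astar.
  have wf' : wf D N (red_w w s0 eps) (red_q q t0 eps).
    split => //.
    + move=> s; rewrite /red_w; case: eqP => [->|_] //; rewrite subr_ge0.
      exact: (le_trans eB e0w).
    + move=> t; rewrite /red_q; case: eqP => [->|_] //; rewrite subr_ge0.
      exact: (le_trans eB e0q).
  move/andP: BmC => [t0Bm NBm].
  apply: (@split_case n IH' D N (red_w w s0 eps) (red_q q t0 eps) (Bm :&: D) cD wf').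
  - exact: finset.subsetIr.
  - by apply/set0Pn; exists t0; rewrite inE t0Bm t0D.
  - apply/negP => /eqP HD; move/negP: NBm; apply.
    apply: (fintype.subset_trans (ND s0)); rewrite -HD; exact: finset.subsetIl.
  - move=> B'; apply: (le_trans _ (hk B')).
    apply: (le_trans (@phi_capD D N _ _ Bm wf')).
    rewrite phi_red t0Bm (negbTE NBm) /eps; lra.
move=> nobad.
have hbad : forall B', Cbad B' -> eps0 <= phi N w q B' - phistar.
  move=> B' HB'; rewrite leNgt; apply/negP => H; apply: nobad; exists B'.
  by rewrite HB' ltW.
have e0 : 0 <= eps0 by rewrite /eps0 le_min (ltW ws) (ltW qt).
have hk := @key_ineq N w q s0 t0 eps0 phistar e0 Amin' hbad.
apply: (@lift_red D N w q s0 t0 eps0 phistar) => //.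
  by exists Astar.
have wf' : wf D N (red_w w s0 eps0) (red_q q t0 eps0).
  split => //.
  + by move=> s; rewrite /red_w; case: eqP => [->|_] //; rewrite subr_ge0.
  + by move=> t; rewrite /red_q; case: eqP => [->|_] //; rewrite subr_ge0.
apply: (IHm D) => //.
move: cm; rewrite /meas.
have sw : [set s | 0 < red_w w s0 eps0 s] \subset [set s | 0 < w s].
  apply/fintype.subsetP => s; rewrite !inE /red_w; case: eqP => [->|_] H //.
have sq : [set t | 0 < red_q q t0 eps0 t] \subset [set t | 0 < q t].
  apply/fintype.subsetP => t; rewrite !inE /red_q; case: eqP => [->|_] H //.
have cw := subset_leq_card sw.
have cq := subset_leq_card sq.
have [hle|hlt] := leP (w s0) (q t0).
  have pw : [set s | 0 < red_w w s0 eps0 s] \proper [set s | 0 < w s].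
    apply/properP; split => //; exists s0; first by rewrite inE.
    by rewrite inE /red_w eqxx /eps0 (min_l hle) subrr ltxx.
  have := proper_card pw; lia.
have pq : [set t | 0 < red_q q t0 eps0 t] \proper [set t | 0 < q t].
  apply/properP; split => //; exists t0; first by rewrite inE.
  by rewrite inE /red_q eqxx /eps0 (min_r (ltW hlt)) subrr ltxx.
have := proper_card pq; lia.
Qed.

Lemma main_gen n m (D : {set T}) N w q :
  (#|D| <= n)%N -> (meas w q <= m)%N -> wf D N w q -> concl N w q.
Proof.
elim: n m D N w q => [|n IHn] m D N w q.
  move=> cD _ wfD; apply: (@trivial_case D N w q wfD) => -[s [t [tN _ _]]].
  case: wfD => _ _ ND; have := fintype.subsetP (ND s) t tN.
  by move: cD; rewrite leqn0 => /eqP/cards0_eq ->; rewrite inE.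
elim: m D N w q => [|m IHm] D N w q.
  move=> _ cm wfD; apply: (@trivial_case D N w q wfD) => -[s [t [_ ws _]]].
  move: cm; rewrite leqn0 addn_eq0 => /andP [/eqP /cards0_eq H _].
  have : s \in [set s | 0 < w s] by rewrite inE.
  by rewrite H inE.
exact: step.
Qed.

Lemma flow_le_phi N w q F A : flow_ok N w q F -> fval F <= phi N w q A.
Proof.
case=> F0 FN Fw Fq.
apply: (@le_trans _ _ (\sum_s \sum_t ((if t \in A then F s t else 0) +
                        (if N s \subset A then 0 else F s t)))).
  apply: ler_sum => s _; apply: ler_sum => t _.
  case: (boolP (t \in A)) => tA.
    by rewrite lerDl; case: ifP.
  case: (boolP (N s \subset A)) => NA; last by rewrite add0r.
  rewrite FN ?addr0 //; apply/negP => tN; move/negP: tA; apply.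
  exact: (fintype.subsetP NA).
rewrite /phi.
under eq_bigr do rewrite big_split /=.
rewrite big_split /= lerD //.
  rewrite exchange_big /=; apply: ler_sum => t _.
  by case: ifP => _; [exact: Fq | rewrite big1].
apply: ler_sum => s _; case: ifP => _; first by rewrite big1.
exact: Fw.
Qed.
End Gale.

Section Final.
Variables (R : realType) (Omega : finType) (p q : Omega -> R).
Hypotheses (hp : is_distr p) (hq : is_distr q).

Let S := (Omega * Omega)%type.
Let N (s : S) : {set Omega} := [set s.1; s.2].
Let w (s : S) : R := p s.1 * p s.2.

Lemma wf_setT : wf [set: Omega] N w q.
Proof.
case: hp => p0 _; case: hq => q0 _.
split.
- by move=> s; rewrite /w mulr_ge0.
- exact: q0.
- by move=> s; exact: finset.subsetT.
Qed.

Lemma sum_w : \sum_s w s = 1.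
Proof.
case: hp => _ p1.
rewrite /w -(pair_bigA _ (fun x y => p x * p y)) /=.
by rewrite -big_distrlr /= p1 mulr1.
Qed.

Lemma obj_phi B : objective p q B = phi N w q B.
Proof.
case: hp => _ p1.
rewrite /objective /phi -big_mkcond /=.
have -> : \sum_s (if N s \subset B then 0 else w s) =
   \sum_s w s - \sum_s (if N s \subset B then w s else 0).
  rewrite -sumrB; apply: eq_bigr => s _; case: ifP => _; rewrite ?subrr ?subr0 //.
rewrite sum_w.
have -> : \sum_s (if N s \subset B then w s else 0) = (\sum_(x in B) p x) ^+ 2.
  rewrite /w -(pair_bigA _ (fun x y => if N (x, y) \subset B then p x * p y else 0)) /=.
  rewrite expr2 big_distrlr /= [RHS]big_mkcond /=; apply: eq_bigr => x _.
  rewrite /N /=; case: (boolP (x \in B)) => xB.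
    rewrite [RHS]big_mkcond /=; apply: eq_bigr => y _.
    by rewrite finset.subUset !finset.sub1set xB.
  by rewrite big1 // => y _; rewrite finset.subUset !finset.sub1set (negbTE xB).
have hc : \sum_(s in ~: B) p s = 1 - \sum_(s in B) p s.
  rewrite -p1 [in RHS](bigID (fun s => s \in B)) /= addrAC subrr add0r.
  by apply: eq_bigl => s; rewrite inE.
rewrite hc; ring.
Qed.

Definition FK (K : Omega -> Omega -> Omega -> R) (s : S) (t : Omega) : R :=
  if t \in N s then p s.1 * p s.2 * K s.1 s.2 t else 0.

Lemma acc_val K : acc_prob p K = fval (FK K).
Proof.
rewrite /acc_prob /fval -(pair_bigA _ (fun x y => \sum_t FK K (x, y) t)) /=.
apply: eq_bigr => x _; apply: eq_bigr => y _; apply: eq_bigr => z _.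
by rewrite /FK /N in_set2.
Qed.

Lemma valid_flow K : valid_rule p q K -> flow_ok N w q (FK K).
Proof.
case=> hK hout; case: hp => p0 _.
have pK : forall x y z, 0 <= p x * p y * K x y z.
  by move=> x y z; rewrite !mulr_ge0 //; case: (hK x y) => ->.
split.
- by move=> s t; rewrite /FK; case: ifP.
- by move=> s t tN; rewrite /FK (negbTE tN).
- move=> s; apply: (@le_trans _ _ (\sum_t p s.1 * p s.2 * K s.1 s.2 t)).
    by apply: ler_sum => t _; rewrite /FK; case: ifP.
  by rewrite -mulr_sumr; case: (hK s.1 s.2) => _ ->; rewrite mulr1.
- move=> t; rewrite -(hout t) /output_law.
  rewrite -(pair_bigA _ (fun x y => FK K (x, y) t)) /=.
  apply: ler_sum => x _; apply: ler_sum => y _; rewrite /FK; case: ifP => //.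
Qed.

Lemma acc_le K B : valid_rule p q K -> acc_prob p K <= objective p q B.
Proof.
by move=> vK; rewrite acc_val obj_phi; apply: flow_le_phi; exact: valid_flow.
Qed.

Lemma lower : exists K, valid_rule p q K /\ exists A, objective p q A <= acc_prob p K.
Proof.
have [F [[F0 FN Fw Fq] [A hA]]] :=
  @main_gen R S Omega #|[set: Omega]| (meas w q) [set: Omega] N w q (leqnn _) (leqnn _) wf_setT.
case: hp => p0 p1; case: hq => q0 q1.
pose u s := w s - \sum_t F s t.
pose r z := q z - \sum_s F s z.
pose Rt := \sum_z r z.
pose rho z := if Rt == 0 then 0 else r z / Rt.
have u0 : forall s, 0 <= u s by move=> s; rewrite subr_ge0.
have r0 : forall z, 0 <= r z by move=> z; rewrite subr_ge0.
have Rt0 : 0 <= Rt by rewrite sumr_ge0.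
have rho0 : forall z, 0 <= rho z.
  by move=> z; rewrite /rho; case: ifP => // _; rewrite divr_ge0.
have sumu : \sum_s u s = Rt.
  rewrite /Rt /u /r !sumrB sum_w q1; congr (_ - _).
  exact: exchange_big.
have urho : forall s, u s * \sum_z rho z = u s.
  move=> s; rewrite /rho; case: eqP => HR.
    have : u s = 0.
      exact: (@psumr_eq0P _ _ predT u (fun i _ => u0 i) (etrans sumu HR) s isT).
    by move=> ->; rewrite mul0r.
  rewrite -mulr_suml -/Rt mulfV ?mulr1 //; exact/eqP.
have Rrho : forall z, Rt * rho z = r z.
  move=> z; rewrite /rho; case: eqP => HR.
    rewrite mulr0; apply/esym.
    exact: (@psumr_eq0P _ _ predT r (fun i _ => r0 i) HR z isT).
  by rewrite mulrC divfK //; exact/eqP.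
have Fzero : forall s, w s = 0 -> forall t, F s t = 0.
  move=> s ws t; have H : \sum_t F s t = 0.
    apply: sum_le0_eq0; first exact: F0.
    by move: (Fw s); rewrite ws.
  exact: (@psumr_eq0P _ _ predT (F s) (fun i _ => F0 s i) H t isT).
pose K x y z := if w (x, y) == 0 then q z else (F (x, y) z + u (x, y) * rho z) / w (x, y).
have wK : forall x y z, p x * p y * K x y z = F (x, y) z + u (x, y) * rho z.
  move=> x y z; rewrite /K; case: eqP => hw.
    have hu : u (x, y) = 0 by rewrite /u hw big1 ?subr0 // => t _; rewrite Fzero.
    rewrite hu (Fzero _ hw) mul0r addr0; move: hw; rewrite /w /= => ->; by rewrite mul0r.
  by rewrite mulrC divfK //; apply/eqP; exact: hw.
have hK : is_selection_rule K.
  move=> x y; split.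
    move=> z; rewrite /K; case: eqP => hw //.
    rewrite divr_ge0 ?addr_ge0 ?mulr_ge0 //; exact: (wf_setT.1).
  rewrite /K; case: eqP => hw //.
  rewrite -mulr_suml big_split /= -mulr_sumr urho /u subrKC mulfV //.
  exact/eqP.
exists K; split.
  split => // z; rewrite /output_law.
  under eq_bigr do under eq_bigr do rewrite wK.
  rewrite (pair_bigA _ (fun x y => F (x, y) z + u (x, y) * rho z)) /=.
  rewrite big_split /= -mulr_suml.
  rewrite (eq_bigr (fun s => F s z)); last by case.
  have -> : \sum_(i : S) u (i.1, i.2) = \sum_i u i by apply: eq_bigr => -[].
  by rewrite sumu Rrho /r addrC subrK.
exists A; rewrite obj_phi; apply: (le_trans hA).
rewrite acc_val; apply: ler_sum => s _; apply: ler_sum => t _.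
rewrite /FK; case: ifP => tN; last by rewrite FN ?tN.
by rewrite wK -surjective_pairing lerDl mulr_ge0.
Qed.
End Final.

Unset Implicit Arguments.

Theorem theorem3 (R : realType) (Omega : finType) (p q : Omega -> R)
  (hp : is_distr p) (hq : is_distr q) :
  exists A0 : {set Omega},
    opt_acc p q = objective p q A0 /\
    forall A : {set Omega}, objective p q A0 <= objective p q A.
Proof.
have [A0 [_ A0min]] := @exists_min R Omega (objective p q) predT finset.set0 isT.
exists A0; split; last by move=> A; exact: A0min.
have [K0 [vK0 [A hA]]] := @lower R Omega p q hp hq.
rewrite /opt_acc; apply/le_anti/andP; split.
  apply: ge_sup; first by exists (acc_prob p K0); exists K0.
  by move=> a [K vK <-]; exact: (@acc_le R Omega p q hp K A0 vK).
apply: (le_trans (A0min A isT)); apply: (le_trans hA).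
apply: ub_le_sup; last by exists K0.
exists (objective p q A0).
by move=> a [K vK <-]; exact: (@acc_le R Omega p q hp K A0 vK).
Qed.
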